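(* Let $n\ge 2$ and let $|\psi_1\rangle,|\psi_2\rangle\in S^{2n-1}$ be two non-equivalent quantum states, i.e. $|\psi_1\rangle\notin[|\psi_2\rangle]$. Then there exist $\varepsilon>0$ and a self-adjoint $n\times n$ matrix $H'$ with $\|H'\|_{HS}=1$ and $H'\neq I$ such that $$|\psi_1\rangle=e^{i\varepsilon H'}|\psi_2\rangle .$$ Moreover, neither $|\psi_1\rangle$ nor $|\psi_2\rangle$ is an eigenvector of $H'$.
   Context: $S^{2n-1}$ denotes the unit sphere of $\mathbb{C}^n$ with the standard inner product $\langle\cdot|\cdot\rangle$; its elements are (pure) quantum states. For $|\psi\rangle\in S^{2n-1}$ the equivalence class is $[|\psi\rangle]=\{e^{i\varrho}|\psi\rangle:\varrho\in\mathbb{R}\}$, and two states are equivalent if one lies in the equivalence class of the other. $\|\cdot\|_{HS}$ is the Hilbert–Schmidt norm. *)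

(* Defs.v *)
From HB Require Import structures.
From mathcomp Require Import all_boot all_order all_algebra.
From mathcomp Require Import all_classical all_reals all_analysis.
From mathcomp Require Import complex.
Import numFieldNormedType.Exports.
Set Implicit Arguments. Unset Strict Implicit. Unset Printing Implicit Defensive.
Import Order.TTheory GRing.Theory Num.Theory.
Local Open Scope ring_scope.
Local Open Scope complex_scope.

Definition adjmx (R : realType) (n m : nat) (A : 'M[R[i]]_(n, m)) : 'M[R[i]]_(m, n) :=
  map_mx (fun z : R[i] => z^*) A^T.

Definition selfadjoint (R : realType) (n : nat) (H : 'M[R[i]]_n) : Prop :=
  adjmx H = H.

Definition inner (R : realType) (n : nat) (u v : 'cV[R[i]]_n) : R[i] :=
  \sum_(k < n) (u k 0)^* * v k 0.

Definition on_sphere (R : realType) (n : nat) (psi : 'cV[R[i]]_n) : Prop :=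
  inner psi psi = 1.

Definition expi (R : realType) (rho : R) : R[i] := (cos rho) +i* (sin rho).

Definition eq_class (R : realType) (n : nat) (psi : 'cV[R[i]]_n) : set 'cV[R[i]]_n :=
  [set phi | exists rho : R, phi = expi rho *: psi].

Definition hs_norm (R : realType) (n : nat) (A : 'M[R[i]]_n) : R :=
  Num.sqrt (\sum_(i < n) \sum_(j < n) (complex.Re (A i j) ^+ 2 + complex.Im (A i j) ^+ 2)).

Definition expmx_partial (R : realType) (n : nat) (A : 'M[R[i]]_n) (N : nat)
  : 'M[R[i]]_n :=
  \sum_(k < N) ((k`!)%:R)^-1 *: A ^+ k.

Definition expmx (R : realType) (n : nat) (A : 'M[R[i]]_n) : 'M[R[i]]_n :=
  \matrix_(i, j)
    ((limn (fun N : nat => (complex.Re (expmx_partial A N i j) : R))) +i*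
     (limn (fun N : nat => (complex.Im (expmx_partial A N i j) : R)))).

Definition eigenvector (R : realType) (n : nat) (H : 'M[R[i]]_n) (psi : 'cV[R[i]]_n) : Prop :=
  psi != 0 /\ exists lambda : R[i], H *m psi = lambda *: psi.

(* Main.v *)
Require Import Defs.
From HB Require Import structures.
From mathcomp Require Import all_boot all_order all_algebra.
From mathcomp Require Import all_classical all_reals all_analysis.
From mathcomp Require Import complex.
From mathcomp Require Import ring lra.
Import numFieldNormedType.Exports.
Import Order.TTheory GRing.Theory Num.Theory.
Local Open Scope ring_scope.
Local Open Scope complex_scope.
Local Open Scope classical_set_scope.
Local Notation Re := complex.Re.
Local Notation Im := complex.Im.
Section S.
Variable R : realType.
Implicit Types x y : R[i].
Lemma ReD x y : Re (x + y) = Re x + Re y. Proof. case: x => a b; case: y => c d. reflexivity. Qed.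
Lemma ImD x y : Im (x + y) = Im x + Im y. Proof. case: x => a b; case: y => c d. reflexivity. Qed.
Lemma ReM x y : Re (x * y) = Re x * Re y - Im x * Im y. Proof. case: x => a b; case: y => c d. reflexivity. Qed.
Lemma ImM x y : Im (x * y) = Re x * Im y + Im x * Re y. Proof. case: x => a b; case: y => c d /=. ring. Qed.
Lemma Rerc (r : R) x : Re (r%:C * x) = r * Re x. Proof. rewrite ReM /=. ring. Qed.
Lemma Imrc (r : R) x : Im (r%:C * x) = r * Im x. Proof. rewrite ImM /=. ring. Qed.
Lemma Re_sum (I : Type) (s : seq I) (F : I -> R[i]) : Re (\sum_(k <- s) F k) = \sum_(k <- s) Re (F k).
Proof. elim: s => [|a s IH]; rewrite ?big_nil ?big_cons //= ReD IH //. Qed.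
Lemma Im_sum (I : Type) (s : seq I) (F : I -> R[i]) : Im (\sum_(k <- s) F k) = \sum_(k <- s) Im (F k).
Proof. elim: s => [|a s IH]; rewrite ?big_nil ?big_cons //= ImD IH //. Qed.
Lemma natC k : (k%:R : R[i]) = (k%:R : R)%:C. Proof. by rewrite rmorph_nat. Qed.
Lemma invnatC k : ((k%:R : R[i])^-1) = ((k%:R : R)^-1)%:C. Proof. by rewrite natC fmorphV. Qed.
Lemma powI (e : R) k : Re ((0 +i* e)^+k) = (~~ odd k)%:R * (-1)^+(k./2) * e^+k /\
   Im ((0 +i* e)^+k) = (odd k)%:R * (-1)^+(k.-1./2) * e^+k.
Proof.
elim: k => [|k [IHr IHi]]; first by rewrite expr0 /=; split; [ring|ring].
rewrite exprSr ReM ImM IHr IHi /=.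
have h1 : k.+1./2 = (odd k + k./2)%N by rewrite -uphalfE uphalf_half.
rewrite ?h1 ?uphalf_half; case Ho: (odd k) => /=; split; rewrite ?exprD ?expr1 ?expr0 ?[e ^+ k.+1]exprSr; try ring.
have -> : k.-1./2 = k./2.
  by rewrite -{1}(odd_double_half k) Ho add1n /= doubleK.
ring.
Qed.
Lemma Re_partial (e : R) N : Re (\sum_(k < N) (k`!%:R)^-1 * (0 +i* e)^+k) = series (cos_coeff e) N.
Proof.
rewrite /series /= big_mkord Re_sum; apply: eq_bigr => k _.
rewrite invnatC Rerc (powI e k).1 /cos_coeff /=.
rewrite -exprnP; ring.
Qed.
Lemma Im_partial (e : R) N : Im (\sum_(k < N) (k`!%:R)^-1 * (0 +i* e)^+k) = series (sin_coeff e) N.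
Proof.
rewrite /series /= big_mkord Im_sum; apply: eq_bigr => k _.
rewrite invnatC Imrc (powI e k).2 /sin_coeff /=; ring.
Qed.
Lemma cvg_cos (e : R) : series (cos_coeff e) @ \oo --> cos e.
Proof. rewrite unlock; exact: is_cvg_series_cos_coeff. Qed.
Lemma cvg_sin (e : R) : series (sin_coeff e) @ \oo --> sin e.
Proof. rewrite unlock; exact: is_cvg_series_sin_coeff. Qed.
Lemma lim_entries n (A A0 P : 'M[R[i]]_n) (e : R) :
  (forall N, (0 < N)%N -> expmx_partial A N = A0 + (\sum_(k<N) (k`!%:R)^-1 * (0 +i* e)^+k) *: P) ->
  expmx A = A0 + expi e *: P.
Proof.
move=> H; apply/matrixP => i j; rewrite !mxE.
have -> : limn (fun N => Re (expmx_partial A N i j)) = Re (A0 i j) + (cos e * Re (P i j) - sin e * Im (P i j)).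
  apply: cvg_lim => //.
  apply: (@cvg_trans _ ((fun N => Re (A0 i j) + (series (cos_coeff e) N * Re (P i j) - series (sin_coeff e) N * Im (P i j))) @ \oo)).
    apply: near_eq_cvg; exists 1%N => // m /= Hm.
    by rewrite H // !mxE ReD ReM Re_partial Im_partial.
  apply: cvgD; first exact: cvg_cst.
  by apply: cvgB; apply: cvgMr_tmp; [exact: cvg_cos | exact: cvg_sin].
have -> : limn (fun N => Im (expmx_partial A N i j)) = Im (A0 i j) + (cos e * Im (P i j) + sin e * Re (P i j)).
  apply: cvg_lim => //.
  apply: (@cvg_trans _ ((fun N => Im (A0 i j) + (series (cos_coeff e) N * Im (P i j) + series (sin_coeff e) N * Re (P i j))) @ \oo)).
    apply: near_eq_cvg; exists 1%N => // m /= Hm.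
    by rewrite H // !mxE ImD ImM Re_partial Im_partial.
  apply: cvgD; first exact: cvg_cst.
  by apply: cvgD; apply: cvgMr_tmp; [exact: cvg_cos | exact: cvg_sin].
move: (A0 i j) (P i j) => [a b] [c d] /=.
rewrite /expi; apply/eqP; rewrite eq_complex /=; apply/andP; split; apply/eqP; ring.
Qed.
Lemma powP n (P : 'M[R[i]]_n) (c : R[i]) : P *m P = P -> forall k, (c *: P) ^+ k.+1 = c^+k.+1 *: P.
Proof.
move=> hP; elim => [|k IH]; first by rewrite !expr1.
by rewrite exprS IH -mulmxE -scalemxAr -scalemxAl hP scalerA -exprSr.
Qed.
Lemma partial_idem n (P : 'M[R[i]]_n) (c : R[i]) : P *m P = P -> forall N, (0<N)%N ->
  expmx_partial (c *: P) N = (1%:M - P) + (\sum_(k<N) (k`!%:R)^-1 * c^+k) *: P.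
Proof.
move=> hP; case=> // N _; elim: N => [|N IH].
  rewrite /expmx_partial !big_ord_recr !big_ord0 /= !expr0.
  rewrite fact0 invr1 mulr1 !add0r !scale1r.
  by rewrite subrK.
rewrite /expmx_partial big_ord_recr /= -/(expmx_partial _ _) IH [in RHS]big_ord_recr /=.
by rewrite scalerDl addrA powP // scalerA.
Qed.
Lemma expmx_idem n (P : 'M[R[i]]_n) (e : R) : P *m P = P ->
  expmx ((0 +i* e) *: P) = (1%:M - P) + expi e *: P.
Proof. by move=> hP; apply: lim_entries; apply: partial_idem. Qed.
Section Inner.
Variable n : nat.
Local Notation V := 'cV[R[i]]_n.
Lemma inner_scale a b (x y : V) : inner (a *: x) (b *: y) = a^*%R * b * inner x y.
Proof. rewrite /inner mulr_sumr; apply: eq_bigr => k _; rewrite !mxE rmorphM; ring. Qed.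
Lemma innerBl (x y z : V) : inner (x - y) z = inner x z - inner y z.
Proof. rewrite /inner -sumrB; apply: eq_bigr => k _; rewrite !mxE rmorphB; ring. Qed.
Lemma innerBr (x y z : V) : inner x (y - z) = inner x y - inner x z.
Proof. rewrite /inner -sumrB; apply: eq_bigr => k _; rewrite !mxE; ring. Qed.
Lemma inner_conj (x y : V) : (inner x y)^*%R = inner y x.
Proof. rewrite /inner rmorph_sum; apply: eq_bigr => k _; rewrite rmorphM /= conjCK mulrC //.

Qed.
Lemma inner0 (x : V) : inner x x = 0 -> x = 0.
Proof.
move=> h; have /eqP : \sum_(k < n) (x k 0)^*%R * x k 0 = 0 by [].
rewrite psumr_eq0; last by move=> k _; rewrite mulrC mul_conjC_ge0.
move=> /allP hall; apply/matrixP => i j; rewrite ord1 mxE.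
have := hall i (mem_index_enum _); rewrite /= mulf_eq0 conjC_eq0 orbb => /eqP //.
Qed.
End Inner.
Lemma phase (c : R[i]) : c * c^*%R = 1 -> exists rho : R, expi rho = c.
Proof.
case: c => a b /eqP; rewrite eq_complex /= => /andP [/eqP h _].
have ha : -1 <= a <= 1 by apply/andP; split; nra.
have hs : Num.sqrt (1 - a^+2) = `|b| by rewrite -sqrtr_sqr; congr Num.sqrt; nra.
case: (lerP 0 b) => hb.
  exists (acos a); rewrite /expi acosK ?in_itv //= sin_acos // hs ger0_norm //.
exists (- acos a + pi *+ 2); rewrite /expi cosD2pi sinD2pi cosN sinN acosK ?in_itv //= sin_acos // hs ltr0_norm // opprK //.
Qed.
Lemma phase_pos (c : R[i]) : c * c^*%R = 1 -> c != 1 -> exists rho : R, 0 < rho /\ expi rho = c.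
Proof.
case: c => a b /eqP; rewrite eq_complex /= => /andP [/eqP h _] hc1.
have ha : -1 <= a <= 1 by apply/andP; split; nra.
have hs : Num.sqrt (1 - a^+2) = `|b| by rewrite -sqrtr_sqr; congr Num.sqrt; nra.
case: (lerP 0 b) => hb.
  have ha1 : a < 1.
    rewrite lt_neqAle (andP ha).2 andbT; apply/negP => /eqP ha1.
    have hb0 : b = 0 by nra.
    by move: hc1; rewrite ha1 hb0 !eqxx.
  exists (acos a); split; first by apply: acos_gt0; rewrite (andP ha).1 ha1.
  by rewrite /expi acosK ?in_itv //= sin_acos // hs ger0_norm.
exists (- acos a + pi *+ 2); split.
  have := acos_lepi ha; have := @pi_gt0 R; rewrite mulr2n => ? ?; lra.
by rewrite /expi cosD2pi sinD2pi cosN sinN acosK ?in_itv //= sin_acos // hs ltr0_norm // opprK.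
Qed.
Lemma conjcE (x : R[i]) : conjc x = Num.conj x.
Proof. by case: x. Qed.
Lemma ReJ (x : R[i]) : Re (x * x^*%R) = Re x ^+ 2 + Im x ^+ 2.
Proof. case: x => a b /=; ring. Qed.
End S.
Arguments expmx_idem {R n}. Arguments inner_scale {R n}. Arguments innerBl {R n}.
Arguments innerBr {R n}. Arguments inner_conj {R n}. Arguments inner0 {R n}.
Arguments phase {R c}. Arguments phase_pos {R c}. Arguments ReJ {R}. Arguments conjcE {R}. Arguments Re_sum {R I}.

Theorem lemma1 (R : realType) (n : nat) (psi1 psi2 : 'cV[R[i]]_n) :
  (2 <= n)%N ->
  on_sphere psi1 -> on_sphere psi2 ->
  ~ (eq_class psi2 psi1) ->
  exists (eps : R) (H' : 'M[R[i]]_n),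
    0 < eps /\ selfadjoint H' /\ hs_norm H' = 1 /\ H' != 1%:M /\
    psi1 = expmx ((0 +i* eps) *: H') *m psi2 /\
    ~ eigenvector H' psi1 /\ ~ eigenvector H' psi2.
Proof.
move=> hn s1 s2 hneq.
have noneq : forall c, psi1 = c *: psi2 -> False.
  move=> c e; apply: hneq.
  have hc : c * c^*%R = 1.
    by move: s1; rewrite /on_sphere e inner_scale s2 mulr1 mulrC.
  have [rho hr] := phase hc.
  by exists rho; rewrite hr.
have [u hu] : {u | u = psi1 - psi2} by exists (psi1 - psi2).
have [z hz] : {z | z = inner psi1 psi2} by exists (inner psi1 psi2).
have [D hDdef] : {D | D = inner u u} by exists (inner u u).
have hD : D = 2%:R - z - z^*%R.
  by rewrite hDdef hu innerBl !innerBr s1 s2 -(inner_conj psi1 psi2) -hz; ring.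
have hu0 : u != 0.
  apply/eqP => hu0; apply: (noneq 1); rewrite scale1r; apply/eqP; rewrite -subr_eq0 -hu hu0 //.
have hD0 : D != 0 by apply/eqP => h; move: hu0; rewrite (inner0 u) ?eqxx // -hDdef.
have hDc : D^*%R = D by rewrite hDdef inner_conj.
have hz1 : z - 1 != 0.
  apply/negP => /eqP h; move/eqP: hD0; apply; rewrite hD.
  have -> : z = 1 by apply/eqP; rewrite -subr_eq0 h.
  rewrite conjC1; ring.
have hzc1 : z^*%R - 1 != 0.
  have : (z - 1)^*%R != 0 by rewrite conjC_eq0.
  by rewrite rmorphB /= conjC1.
pose P : 'M[R[i]]_n := \matrix_(i, j) (u i 0 * (u j 0)^*%R / D).
have hP : P *m P = P.
  apply/matrixP => i j; rewrite !mxE.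
  transitivity (\sum_k (u i 0 * (u j 0)^*%R / D / D) * ((u k 0)^*%R * u k 0)).
    by apply: eq_bigr => k _; rewrite !mxE; ring.
  by rewrite -mulr_sumr -/(inner u u) -hDdef divfK.
have hPa : selfadjoint P.
  rewrite /selfadjoint /adjmx; apply/matrixP => i j; rewrite !mxE.
  rewrite !conjcE rmorphM /= rmorphM /= fmorphV /= conjCK hDc; ring.
have hs : hs_norm P = 1.
  rewrite /hs_norm.
  have -> : \sum_(i < n) \sum_(j < n) (Re (P i j) ^+ 2 + Im (P i j) ^+ 2) =
            Re (\sum_(i < n) \sum_(j < n) P i j * (P i j)^*%R).
    rewrite Re_sum; apply: eq_bigr => i _; rewrite Re_sum; apply: eq_bigr => j _.
    by rewrite ReJ.
  have -> : \sum_(i < n) \sum_(j < n) P i j * (P i j)^*%R =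
            \sum_(i < n) \sum_(j < n) ((u i 0)^*%R * u i 0) * ((u j 0)^*%R * u j 0) / (D * D).
    apply: eq_bigr => i _; apply: eq_bigr => j _; rewrite !mxE.
    rewrite rmorphM /= rmorphM /= fmorphV /= conjCK hDc invfM; ring.
  under eq_bigr do rewrite -mulr_suml -mulr_sumr -/(inner u u) -hDdef.
  rewrite -!mulr_suml -/(inner u u) -hDdef mulfV ?mulf_neq0 //.
  by rewrite sqrtr1.
have hP1 : P != 1%:M.
  apply/eqP => hP1.
  have : \tr P = 1.
    rewrite /mxtrace; under eq_bigr do rewrite mxE.
    transitivity (\sum_(i < n) (u i 0)^*%R * u i 0 / D).
      by apply: eq_bigr => i _; ring.
    by rewrite -mulr_suml -/(inner u u) -hDdef mulfV.
  rewrite hP1 mxtrace1 => /eqP; rewrite pnatr_eq1 => /eqP hn1.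
  by rewrite hn1 in hn.
have hPpsi2 : P *m psi2 = ((z - 1) / D) *: u.
  apply/matrixP => i j; rewrite !mxE (ord1 j).
  transitivity (u i 0 / D * \sum_k (u k 0)^*%R * psi2 k 0).
    by rewrite mulr_sumr; apply: eq_bigr => k _; rewrite !mxE; ring.
  have -> : \sum_k (u k 0)^*%R * psi2 k 0 = z - 1.
    by rewrite -/(inner u psi2) hu innerBl s2 hz.
  ring.
have [w hwdef] : {w | w = 1 + D / (z - 1)} by exists (1 + D / (z - 1)).
have hDw : D = (w - 1) * (z - 1) by rewrite hwdef; field.
have hw : w * w^*%R = 1.
  have -> : w^*%R = 1 + D / (z^*%R - 1).
    by rewrite hwdef rmorphD /= fmorph_div /= rmorphB /= conjC1 hDc.
  rewrite hwdef hD; field.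
  by rewrite hz1 hzc1.
have hw1 : w != 1.
  by apply/eqP => h; move: hD0; rewrite hDw h subrr mul0r eqxx.
have hw0 : w != 0.
  by apply/eqP => h; move: hw; rewrite h mul0r => /eqP; rewrite eq_sym oner_eq0.
have [eps [heps hexp]] := phase_pos hw hw1.
have E : psi1 = psi2 + (w - 1) *: (P *m psi2).
  rewrite hPpsi2 scalerA.
  have -> : (w - 1) * ((z - 1) / D) = 1 by rewrite mulrA -hDw mulfV.
  by rewrite scale1r hu addrC subrK.
exists eps, P; split; first exact: heps.
split; first exact: hPa.
split; first exact: hs.
split; first exact: hP1.
split.
  rewrite expmx_idem // hexp mulmxDl mulmxBl mul1mx -scalemxAl.
  by rewrite {1}E scalerBl scale1r [w *: _ - _]addrC addrA.
split.
  case=> _ [mu hmu].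
  have h1 : P *m psi1 = w *: (P *m psi2).
    by rewrite {1}E mulmxDr -scalemxAr mulmxA hP scalerBl scale1r addrC subrK.
  have h2 : P *m psi2 = (w^-1 * mu) *: psi1.
    by rewrite -scalerA -hmu h1 scalerA mulVf // scale1r.
  have h3 : psi2 = (1 - (w - 1) * (w^-1 * mu)) *: psi1.
    by rewrite scalerBl scale1r -scalerA -h2 {1}E addrK.
  move: h3; set c := 1 - _ => h3.
  have hc0 : c != 0.
    apply/eqP => hc; move: s2; rewrite /on_sphere h3 inner_scale s1 mulr1 hc conjC0 mul0r.
    by move=> /eqP; rewrite eq_sym oner_eq0.
  by apply: (noneq c^-1); rewrite h3 scalerA mulVf // scale1r.
case=> _ [lam hl].
by apply: (noneq (1 + (w - 1) * lam)); rewrite {1}E hl scalerA scalerDl scale1r.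
Qed.
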